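(* Let $n\ge3$ and $r\in[3,n]$, and suppose $\tilde{\mathfrak b}_r=\mathfrak a\cdot\mathfrak b$ with $\mathfrak a,\mathfrak b\in\mathrm{Mon}(R)\setminus\{R\}$; let $\alpha=\operatorname{mdeg}(\mathfrak a)$, $\beta=\operatorname{mdeg}(\mathfrak b)$. Then: (1) $\alpha,\beta\ge1$ and $\alpha+\beta=a_{\{1\}\cup[3,r]}$; (2) $X^\alpha,Y^\alpha\in G(\mathfrak a)$ and $X^\beta,Y^\beta\in G(\mathfrak b)$; (3) $\alpha=a_{I_1}$ and $\beta=a_{I_2}$ for some $I_1,I_2\subseteq\{1\}\cup[3,r]$ with $I_1\cap I_2=\emptyset$.
   Context: Let $K$ be a field, $N\ge2$, $R=K[X_1,\dots,X_N]$, $X=X_1$, $Y=X_2$. $\mathrm{Mon}(R)$ is the monoid of nonzero monomial ideals of $R$ under ideal multiplication, with identity $R$. For a nonzero ideal $J$, $\operatorname{mdeg}(J)$ is the least $t$ such that $J$ contains a polynomial whose nonzero homogeneous component of smallest degree has degree $t$. For $J\in\mathrm{Mon}(R)$, $G(J)$ denotes the unique set of monomial generators of $J$ that is minimal with respect to divisibility. $[x,y]=\{z\in\mathbb Z:x\le z\le y\}$. For $i\in\mathbb N^+$, $\mathfrak b_i=\langle X^i,Y^i\rangle$. Fix an integer $n\ge 3$ and positive integers $a_1,\dots,a_{n+1}$ with (C1) $a_{n+1}=a_1+\dots+a_{n-1}+2a_n$ and (C2) $a_{i+1}>2(a_1+\dots+a_i)$ for all $i\in[1,n-1]$. For $I\subseteq[1,n+1]$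 put $a_I=\sum_{i\in I}a_i$ ($a_\emptyset=0$). For $r\in[3,n]$, $\tilde{\mathfrak b}_r$ is the ideal generated by $\mathfrak b_{a_1}\mathfrak b_{a_3}\mathfrak b_{a_4}\cdots\mathfrak b_{a_r}$ together with the monomial $X^{a_{[3,r]}-a_2}Y^{a_3-a_2}$. *)

(* Defs.v *)
From mathcomp Require Import all_boot all_algebra.
From mathcomp Require Import mpoly.
Set Implicit Arguments. Unset Strict Implicit. Unset Printing Implicit Defensive.
Import GRing.Theory.
Local Open Scope ring_scope.

Section MonIdeals.
Variables (K : fieldType) (N : nat).
Notation Rp := {mpoly K[N]}.

Definition ideal_gen (S : Rp -> Prop) : Rp -> Prop :=
  fun p => exists s : seq (Rp * Rp),
    (forall x, x \in s -> S x.2) /\ p = \sum_(x <- s) x.1 * x.2.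

Definition ideal_mul (I J : Rp -> Prop) : Rp -> Prop :=
  ideal_gen (fun q => exists f g, I f /\ J g /\ q = f * g).

Definition ideal_eq (I J : Rp -> Prop) : Prop := forall p, I p <-> J p.

Definition is_monomial_ideal (I : Rp -> Prop) : Prop :=
  exists M : 'X_{1..N} -> Prop,
    ideal_eq I (ideal_gen (fun q => exists m, M m /\ q = 'X_[m])).

Definition in_Mon (I : Rp -> Prop) : Prop :=
  is_monomial_ideal I /\ exists p, I p /\ p != 0.

Definition ne_unit_ideal (I : Rp -> Prop) : Prop := ~ I 1.

Definition hcomp (p : Rp) (d : nat) : Rp :=
  \sum_(m <- msupp p | mdeg m == d) p@_m *: 'X_[m].

Definition lowdeg_is (p : Rp) (t : nat) : Prop :=
  hcomp p t != 0 /\ forall d, (d < t)%N -> hcomp p d = 0.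

Definition is_mdeg (J : Rp -> Prop) (t : nat) : Prop :=
  (exists p, J p /\ lowdeg_is p t) /\
  (forall p s, J p -> lowdeg_is p s -> (t <= s)%N).

Definition in_G (J : Rp -> Prop) (m : 'X_{1..N}) : Prop :=
  J 'X_[m] /\
  forall m', J 'X_[m'] -> (exists q : Rp, 'X_[m] = q * 'X_[m']) -> m' = m.

(* exponent vector of X^u Y^v  (X = X_1, Y = X_2, i.e. indices 0 and 1) *)
Definition xy (u v : nat) : 'X_{1..N} :=
  [multinom (if (i : nat) == 0%N then u else if (i : nat) == 1%N then v else 0%N)
  | i < N].

Definition bideal (i : nat) : Rp -> Prop :=
  ideal_gen (fun q => q = 'X_[xy i 0] \/ q = 'X_[xy 0 i]).

Definition btilde (a : nat -> nat) (r : nat) : Rp -> Prop :=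
  let P := foldl ideal_mul (bideal (a 1%N))
                 [seq bideal (a i) | i <- iota 3 (r - 2)] in
  ideal_gen (fun q => P q \/
    q = 'X_[xy ((\sum_(3 <= i < r.+1) a i) - a 2%N)%N (a 3%N - a 2%N)%N]).

End MonIdeals.

(* Main.v *)
Require Import Defs.
From mathcomp Require Import all_boot all_algebra.
From mathcomp Require Import mpoly.
From mathcomp Require Import zify.
Set Implicit Arguments. Unset Strict Implicit. Unset Printing Implicit Defensive.
Import GRing.Theory.
Local Open Scope ring_scope.

Section H_H1.
Variables (K : fieldType) (N : nat).
Notation Rp := {mpoly K[N]}.
Implicit Types (p q : Rp) (m : 'X_{1..N}).

Definition good (P : 'X_{1..N} -> Prop) p :=
  forall m, m \in msupp p -> exists g d, P g /\ m = (g + d)%MM.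

Lemma good0 P : good P 0.
Proof. by move=> m; rewrite mcoeff_msupp mcoeff0 eqxx. Qed.

Lemma goodD P p q : good P p -> good P q -> good P (p + q).
Proof.
move=> hp hq m /msuppD_le; rewrite mem_cat => /orP[]; [exact: hp|exact: hq].
Qed.

Lemma goodMl P p q : good P q -> good P (p * q).
Proof.
move=> hq m /msuppM_le /allpairsP [[m1 m2] /= [h1 h2 ->]].
have [g [d [Pg ->]]] := hq _ h2.
exists g, (m1 + d)%MM; split => //.
by rewrite addmA [(m1 + g)%MM]addmC -addmA.
Qed.

Lemma good_gen P (S : Rp -> Prop) : (forall q, S q -> good P q) ->
  forall p, ideal_gen S p -> good P p.
Proof.
move=> hS p [s [hs ->]]; elim: s hs => [|x s IH] hs.
  by rewrite big_nil; exact: good0.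
rewrite big_cons; apply: goodD; last by apply: IH => y ys; apply: hs; rewrite inE ys orbT.
by apply: goodMl; apply: hS; apply: hs; rewrite inE eqxx.
Qed.

Lemma goodX P m : P m -> good P 'X_[m].
Proof.
move=> Pm k; rewrite msuppX inE => /eqP ->; exists m, 0%MM; split => //.
by rewrite addm0.
Qed.

Definition mgen (P : 'X_{1..N} -> Prop) : Rp -> Prop :=
  ideal_gen (fun q => exists m, P m /\ q = 'X_[m]).

Lemma gen1 (S : Rp -> Prop) q : S q -> ideal_gen S q.
Proof.
move=> Sq; exists [:: (1, q)]; split; first by move=> x; rewrite inE => /eqP ->.
by rewrite big_seq1 mul1r.
Qed.

Definition msum (P Q : 'X_{1..N} -> Prop) m :=
  exists g h, P g /\ Q h /\ m = (g + h)%MM.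

Lemma good_mul (P Q : 'X_{1..N} -> Prop) (A B : Rp -> Prop) :
  (forall p, A p -> good P p) -> (forall p, B p -> good Q p) ->
  forall p, ideal_mul A B p -> good (msum P Q) p.
Proof.
move=> hA hB; apply: good_gen => q [f [g [Af [Bg ->]]]] m /msuppM_le /allpairsP.
case=> [[m1 m2] /= [h1 h2 ->]].
have [g1 [d1 [P1 ->]]] := hA _ Af _ h1.
have [g2 [d2 [P2 ->]]] := hB _ Bg _ h2.
exists (g1 + g2)%MM, (d1 + d2)%MM; split; first by exists g1, g2.
by rewrite !addmA; congr (_ + _)%MM; rewrite -!addmA [(d1 + _)%MM]addmC.
Qed.

Lemma mul_mem (A B : Rp -> Prop) m1 m2 :
  A 'X_[m1] -> B 'X_[m2] -> ideal_mul A B 'X_[m1 + m2].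
Proof. by move=> h1 h2; apply: gen1; exists 'X_[m1], 'X_[m2]; rewrite mpolyXD. Qed.

Lemma monA (A : Rp -> Prop) : is_monomial_ideal A ->
  exists M, (forall p, A p -> good M p) /\ (forall m, M m -> A 'X_[m]).
Proof.
case=> M hM; exists M; split.
  move=> p /hM; apply: good_gen => q [m [Mm ->]]; exact: goodX.
by move=> m Mm; apply/hM/gen1; exists m.
Qed.

End H_H1.

Section H_H2.
Variables (K : fieldType) (N : nat).
Notation Rp := {mpoly K[N]}.
Implicit Types (p q : Rp) (m : 'X_{1..N}).

Lemma lowdegX m : lowdeg_is ('X_[m] : Rp) (mdeg m).
Proof.
have E d : hcomp ('X_[m] : Rp) d = if mdeg m == d then 'X_[m] else 0.
  rewrite /hcomp msuppX big_cons big_nil mcoeffX eqxx scale1r addr0.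
  by case: eqP.
split; first by rewrite E eqxx -msupp_eq0 msuppX.
by move=> d hd; rewrite E; case: eqP => // h; rewrite h ltnn in hd.
Qed.


Lemma hcomp_ex p t : hcomp p t != 0 -> exists2 m, m \in msupp p & mdeg m = t.
Proof.
rewrite /hcomp => h; have: has (fun m => mdeg m == t) (msupp p).
  apply/negPn/negP => /hasPn hn; move/eqP: h; apply.
  by rewrite big_seq_cond big1 // => m /andP[/hn /negbTE ->].
by case/hasP => m hm /eqP; exists m.
Qed.

Lemma mdeg_facts (A : Rp -> Prop) M al :
  (forall p, A p -> good M p) -> (forall m, M m -> A 'X_[m]) -> is_mdeg A al ->
  (exists g, M g /\ mdeg g = al) /\ (forall m, A 'X_[m] -> (al <= mdeg m)%N).
Proof.
move=> hg hM [[p [Ap [lp _]]] hlow].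
have F2 m : A 'X_[m] -> (al <= mdeg m)%N by move=> h; exact: hlow _ _ h (lowdegX m).
split => //.
have [m mp dm] := hcomp_ex lp.
have [g [d [Mg E]]] := hg _ Ap _ mp.
exists g; split => //; apply/eqP; rewrite eqn_leq F2 ?hM // ?andbT.
by rewrite -dm E mdegD leq_addr.
exact: hM.
Qed.

Lemma supp1 m j : (forall i : 'I_N, i != j -> m i = 0%N) -> mdeg m = m j.
Proof.
move=> h; rewrite mdegE (bigD1 j) //= big1 ?addn0 // => i /h.
Qed.

End H_H2.

Section H_H3.
Variables (N : nat) (hN : (2 <= N)%N).
Implicit Types (m : 'X_{1..N}).

Lemma xyE u v (i : 'I_N) : xy N u v i =
  (if (i : nat) == 0%N then u else if (i : nat) == 1%N then v else 0%N).
Proof. by rewrite /xy mnmE. Qed.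

Lemma xyD u v u' v' : (xy N u v + xy N u' v')%MM = xy N (u + u') (v + v').
Proof.
apply/mnmP => i; rewrite mnmDE !xyE.
by case: eqP => // _; case: eqP.
Qed.

Let i0 : 'I_N := Ordinal (ltnW hN).
Let i1 : 'I_N := Ordinal hN.

Lemma mdeg_xy u v : mdeg (xy N u v) = (u + v)%N.
Proof.
rewrite mdegE (bigD1 i0) //= (bigD1 i1) //= big1 ?addn0 ?xyE //=.
move=> i /andP[h0 h1]; rewrite xyE.
have -> : ((i : nat) == 0%N) = false by apply/negbTE; apply: contra h0 => /eqP h; apply/eqP/val_inj.
have -> : ((i : nat) == 1%N) = false by apply/negbTE; apply: contra h1 => /eqP h; apply/eqP/val_inj.
by [].
Qed.

Lemma xy_inj u v u' v' : xy N u v = xy N u' v' -> u = u' /\ v = v'.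
Proof.
move=> E; split.
  by have := congr1 (fun m => m i0) E; rewrite !xyE.
by have := congr1 (fun m => m i1) E; rewrite !xyE.
Qed.

Lemma le_xy u v h d : xy N u v = (h + d)%MM -> (u + v <= mdeg h)%N -> h = xy N u v.
Proof.
move=> E le; have : mdeg d = 0%N.
  by move: (congr1 mdeg E); rewrite mdegD mdeg_xy => e; move: le; rewrite e; lia.
by move/eqP; rewrite mdeg_eq0 => /eqP dE; rewrite E dE addm0.
Qed.

Lemma le_x0 u h d : xy N u 0 = (h + d)%MM -> h = xy N (mdeg h) 0.
Proof.
move=> E; have hz i : i != i0 -> h i = 0%N.
  move=> ne; have := congr1 (fun m => m i) E; rewrite mnmDE xyE.
  have -> : ((i : nat) == 0%N) = false by apply/negbTE; apply: contra ne => /eqP h0; apply/eqP/val_inj.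
  by case: ifP; lia.
rewrite (supp1 hz); apply/mnmP => i; rewrite xyE.
case: (eqVneq i i0) => [->|ne] //=; rewrite hz //.
have -> : ((i : nat) == 0%N) = false by apply/negbTE; apply: contra ne => /eqP h0; apply/eqP/val_inj.
by case: ifP.
Qed.

Lemma le_0y u h d : xy N 0 u = (h + d)%MM -> h = xy N 0 (mdeg h).
Proof.
move=> E; have hz i : i != i1 -> h i = 0%N.
  move=> ne; have := congr1 (fun m => m i) E; rewrite mnmDE xyE.
  have -> : ((i : nat) == 1%N) = false by apply/negbTE; apply: contra ne => /eqP h0; apply/eqP/val_inj.
  by case: ifP; lia.
rewrite (supp1 hz); apply/mnmP => i; rewrite xyE.
case: (eqVneq i i1) => [->|ne] //=; rewrite hz //.
have -> : ((i : nat) == 1%N) = false by apply/negbTE; apply: contra ne => /eqP h0; apply/eqP/val_inj.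
by case: ifP.
Qed.

End H_H3.

Section H_H4.
Variables (K : fieldType) (N : nat) (a : nat -> nat) (r : nat).
Notation Rp := {mpoly K[N]}.

Lemma good_mono (P Q : 'X_{1..N} -> Prop) (p : Rp) :
  (forall m, P m -> Q m) -> good P p -> good Q p.
Proof. by move=> hPQ hp m /hp [g [d [Pg E]]]; exists g, d; split => //; exact: hPQ. Qed.

Lemma djU1 (T : finType) (x : T) (A B : {set T}) :
  x \notin B -> [disjoint A & B] -> [disjoint x |: A & B].
Proof.
move=> xB dj; apply/pred0P => y /=; rewrite in_setU1.
case: eqP => [->|_] /=; first by rewrite (negbTE xB).
by move/pred0P: dj => /(_ y).
Qed.

Definition sk k := (a 1%N + \sum_(3 <= i < 3 + k) a i)%N.

Definition Gf k (g : 'X_{1..N}) : Prop := exists I1 I2 : {set 'I_r.+1},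
  [disjoint I1 & I2] /\
  (forall i : 'I_r.+1, i \in I1 :|: I2 -> (i : nat) = 1%N \/ (3 <= i < 3 + k)%N) /\
  g = xy N (\sum_(i in I1) a i) (\sum_(i in I2) a i) /\
  ((\sum_(i in I1) a i) + (\sum_(i in I2) a i) = sk k)%N.

Definition Pk k : Rp -> Prop := foldl (@ideal_mul K N) (bideal (K:=K) (N:=N) (a 1%N))
                 [seq bideal (K:=K) (N:=N) (a i) | i <- iota 3 k].

Lemma bideal_good b (p : Rp) : bideal (K:=K) (N:=N) b p -> good (fun g => g = xy N b 0 \/ g = xy N 0 b) p.
Proof.
apply: good_gen => q [] ->; apply: goodX; [left|right] => //.
Qed.

Lemma bideal_X b : bideal (K:=K) (N:=N) b 'X_[xy N b 0] /\ bideal (K:=K) (N:=N) b 'X_[xy N 0 b].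
Proof. by split; apply: gen1; [left|right]. Qed.

Lemma fold_inv k : (3 + k <= r.+1)%N ->
  (forall p, Pk k p -> good (Gf k) p) /\
  Pk k 'X_[xy N (sk k) 0] /\ Pk k 'X_[xy N 0 (sk k)].
Proof.
move=> hk0.
have r1 : (1 < r.+1)%N by lia.
move: hk0.
elim: k => [|k IH] hk.
  rewrite /Pk /= /sk big_geq // addn0; split; last exact: bideal_X.
  move=> p /bideal_good; apply: good_mono => g [] ->.
    exists [set inord 1], set0; have dj0 : [disjoint [set (inord 1 : 'I_r.+1)] & set0] by apply/pred0P => x; rewrite !inE andbF.
    rewrite dj0 big_set0 big_set1 inordK //; split => //.
    split; last by split => //; rewrite /sk big_geq // !addn0.
    by move=> i; rewrite setU0 inE => /eqP ->; left; rewrite inordK.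
  exists set0, [set inord 1]; have dj0 : [disjoint set0 & [set (inord 1 : 'I_r.+1)]] by apply/pred0P => x; rewrite !inE.
  rewrite dj0 big_set0 big_set1 inordK //; split => //.
  split; last by split => //; rewrite /sk big_geq // add0n addn0.
  by move=> i; rewrite set0U inE => /eqP ->; left; rewrite inordK.
have [IHa [IHb IHc]] := IH (ltnW hk).
have PE : Pk k.+1 = ideal_mul (Pk k) (bideal (K:=K) (N:=N) (a (3 + k))).
  rewrite /Pk -(addn1 k) (iotaD 3 k 1) map_cat foldl_cat [iota _ 1]/=; reflexivity.
have skE : sk k.+1 = (sk k + a (3 + k))%N.
  by rewrite /sk addnS big_nat_recr /= ?addnA //; lia.
rewrite PE skE; split; last first.
  have [b1 b2] := bideal_X (a (3 + k)).
  have E1 : xy N (sk k + a (3+k)) 0 = (xy N (sk k) 0 + xy N (a (3+k)) 0)%MM by rewrite xyD addn0.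
  have E2 : xy N 0 (sk k + a (3+k)) = (xy N 0 (sk k) + xy N 0 (a (3+k)))%MM by rewrite xyD addn0.
  by rewrite E1 E2; split; apply: mul_mem.
move=> p hp; apply: good_mono (good_mul IHa (@bideal_good _) hp).
move=> g [g1 [h [[I1 [I2 [dj [hI [-> hs]]]]] [hh ->]]]].
set j : 'I_r.+1 := inord (3 + k).
have jE : (j : nat) = (3 + k)%N by rewrite inordK //.
have jn : forall I : {set 'I_r.+1}, (forall i : 'I_r.+1, i \in I -> (i : nat) = 1%N \/ (3 <= i < 3 + k)%N) -> j \notin I.
  by move=> I hI'; apply/negP => /hI'; rewrite jE; lia.
have jn1 : j \notin I1 by apply: jn => i hi; apply: hI; rewrite inE hi.
have jn2 : j \notin I2 by apply: jn => i hi; apply: hI; rewrite inE hi orbT.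
move: hs hI; set s1 := \sum_(i in I1) a i; set s2 := \sum_(i in I2) a i => hs hI.
case: hh => ->.
  exists (j |: I1), I2; rewrite big_setU1 //= (djU1 jn2 dj) xyD jE -/s1 -/s2.
  split => //; split; last split.
  - move=> i; rewrite -setUA in_setU1 => /orP[/eqP ->|/hI]; rewrite ?jE; lia.
  - by rewrite addn0 addnC.
  - rewrite skE -hs; lia.
exists I1, (j |: I2); rewrite big_setU1 //= disjoint_sym (djU1 jn1) 1?disjoint_sym // xyD jE -/s1 -/s2.
split => //; split; last split.
- move=> i; rewrite setUCA in_setU1 => /orP[/eqP ->|/hI]; rewrite ?jE; lia.
- by rewrite ?add0n ?addn0 addnC.
- rewrite skE -hs; lia.
Qed.

End H_H4.

Section H_H5.
Variables (K : fieldType) (N : nat) (hN : (2 <= N)%N).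
Notation Rp := {mpoly K[N]}.

Lemma goodX_inv P m : @good K N P 'X_[m] -> exists g d, P g /\ m = (g + d)%MM.
Proof. by move=> h; apply: h; rewrite msuppX mem_seq1. Qed.

Lemma div_inv m m' (q : Rp) : 'X_[m] = q * 'X_[m'] -> exists d, m = (m' + d)%MM.
Proof.
move=> E; have : good (fun g => g = m') ('X_[m] : Rp) by rewrite E; apply/goodMl/goodX.
by case/goodX_inv => g [d [-> ->]]; exists d.
Qed.

Lemma inG_x (A : Rp -> Prop) al : (forall m, A 'X_[m] -> (al <= mdeg m)%N) ->
  A 'X_[xy N al 0] -> in_G A (xy N al 0).
Proof.
move=> F2 h; split => // m' hm' [q /div_inv [d E]].
have Em := le_x0 hN E; have := F2 _ hm'; have := congr1 mdeg E.
rewrite mdegD mdeg_xy // => e le.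
by rewrite Em; congr xy; lia.
Qed.

Lemma inG_y (A : Rp -> Prop) al : (forall m, A 'X_[m] -> (al <= mdeg m)%N) ->
  A 'X_[xy N 0 al] -> in_G A (xy N 0 al).
Proof.
move=> F2 h; split => // m' hm' [q /div_inv [d E]].
have Em := le_0y hN E; have := F2 _ hm'; have := congr1 mdeg E.
rewrite mdegD mdeg_xy // => e le.
by rewrite Em; congr xy; lia.
Qed.

End H_H5.

Unset Implicit Arguments.
Theorem lemma4p12 (K : fieldType) (N : nat) (hN : (2 <= N)%N)
  (n : nat) (hn : (3 <= n)%N) (a : nat -> nat)
  (hpos : forall i, (1 <= i <= n.+1)%N -> (0 < a i)%N)
  (C1 : a n.+1 = ((\sum_(1 <= i < n) a i) + 2 * a n)%N)
  (C2 : forall i, (1 <= i <= n - 1)%N -> (2 * (\sum_(1 <= j < i.+1) a j) < a i.+1)%N)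
  (r : nat) (hr : (3 <= r <= n)%N)
  (A B : {mpoly K[N]} -> Prop)
  (hA : in_Mon A) (hB : in_Mon B)
  (hA1 : ne_unit_ideal A) (hB1 : ne_unit_ideal B)
  (hAB : ideal_eq (btilde (K:=K) (N:=N) a r) (ideal_mul A B))
  (al be : nat) (hal : is_mdeg A al) (hbe : is_mdeg B be) :
  ((1 <= al)%N /\ (1 <= be)%N /\ (al + be = a 1%N + \sum_(3 <= i < r.+1) a i)%N) /\
  (in_G A (xy N al 0) /\ in_G A (xy N 0 al) /\
   in_G B (xy N be 0) /\ in_G B (xy N 0 be)) /\
  (exists I1 I2 : {set 'I_r.+1},
     (forall i : 'I_r.+1, i \in I1 :|: I2 -> (i : nat) = 1%N \/ (3 <= i)%N) /\
     [disjoint I1 & I2] /\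
     al = (\sum_(i in I1) a i)%N /\ be = (\sum_(i in I2) a i)%N).
Proof.
have [hr3 hrn] := andP hr.
set SS := \sum_(3 <= i < r.+1) a i.
set D := (a 1%N + SS)%N.
have hk : (3 + (r - 2) <= r.+1)%N.
  lia.
have skD : sk a (r - 2) = D by rewrite /D /sk (_ : 3 + (r - 2) = r.+1)%N; [|lia].
have [Fa [Fb Fc]] := @fold_inv K N a r (r - 2) hk.
rewrite skD in Fb Fc.
set ex := xy N (SS - a 2%N) (a 3%N - a 2%N).
have exE : btilde (K:=K) (N:=N) a r = ideal_gen (fun q => Pk (K:=K) a (r - 2) q \/ q = 'X_[ex]) by [].
have exdeg : (D < mdeg ex)%N.
  rewrite mdeg_xy // /D.
  have S3 : (a 3%N <= SS)%N by rewrite /SS big_ltn; [exact: leq_addr|lia].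
  have c2 := C2 2%N ltac:(lia).
  rewrite big_ltn // big_ltn // big_geq // in c2.
  have := hpos 1%N ltac:(lia); lia.
pose Gbt g := Gf a r (r - 2) g \/ g = ex.
have bt_good p : btilde (K:=K) (N:=N) a r p -> good Gbt p.
  rewrite exE; apply: good_gen => q [/Fa|->].
    by apply: good_mono => g h; left.
  by apply: goodX; right.
have Gdeg g : Gbt g -> (D <= mdeg g)%N.
  case=> [[I1 [I2 [_ [_ [-> e]]]]]|->]; last exact: ltnW.
  by rewrite mdeg_xy // e skD.
have bt_mem p : Pk (K:=K) a (r - 2) p -> btilde (K:=K) (N:=N) a r p.
  by move=> h; rewrite exE; apply: gen1; left.
have [MA [hgA hMA]] := monA hA.1.
have [MB [hgB hMB]] := monA hB.1.
have [[gA [MgA dgA]] F2A] := mdeg_facts hgA hMA hal.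
have [[gB [MgB dgB]] F2B] := mdeg_facts hgB hMB hbe.
have ABg p : btilde (K:=K) (N:=N) a r p -> good (msum MA MB) p.
  by move=> /hAB; apply: good_mul.
have BTm p : ideal_mul A B p -> btilde (K:=K) (N:=N) a r p by move/hAB.
have geD : (D <= al + be)%N.
  have := BTm _ (mul_mem (hMA _ MgA) (hMB _ MgB)).
  move/bt_good/goodX_inv => [h [d [Gh E]]].
  have := Gdeg _ Gh; have := congr1 mdeg E; rewrite !mdegD dgA dgB; lia.
have [XA [XB eD]] : A 'X_[xy N al 0] /\ B 'X_[xy N be 0] /\ (al + be = D)%N.
  have := ABg _ (bt_mem _ Fb) => /goodX_inv [g [d [[g1 [g2 [M1 [M2 ->]]]] E]]].
  have E1 : xy N D 0 = (g1 + (g2 + d))%MM by rewrite E addmA.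
  have E2 : xy N D 0 = (g2 + (g1 + d))%MM by rewrite E (addmC g1 g2) addmA.
  have e1 := le_x0 hN E1; have e2 := le_x0 hN E2.
  have l1 := F2A _ (hMA _ M1); have l2 := F2B _ (hMB _ M2).
  have := congr1 mdeg E; rewrite !mdegD mdeg_xy // addn0 => ed.
  have d1 : mdeg g1 = al by lia.
  have d2 : mdeg g2 = be by lia.
  split; [rewrite -d1 -e1; exact: hMA | split; [rewrite -d2 -e2; exact: hMB| lia]].
have [YA YB] : A 'X_[xy N 0 al] /\ B 'X_[xy N 0 be].
  have := ABg _ (bt_mem _ Fc) => /goodX_inv [g [d [[g1 [g2 [M1 [M2 ->]]]] E]]].
  have E1 : xy N 0 D = (g1 + (g2 + d))%MM by rewrite E addmA.
  have E2 : xy N 0 D = (g2 + (g1 + d))%MM by rewrite E (addmC g1 g2) addmA.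
  have e1 := le_0y hN E1; have e2 := le_0y hN E2.
  have l1 := F2A _ (hMA _ M1); have l2 := F2B _ (hMB _ M2).
  have := congr1 mdeg E; rewrite !mdegD mdeg_xy // add0n => ed.
  have d1 : mdeg g1 = al by lia.
  have d2 : mdeg g2 = be by lia.
  split; [rewrite -d1 -e1; exact: hMA | rewrite -d2 -e2; exact: hMB].
have pos (I : {mpoly K[N]} -> Prop) g al' : ne_unit_ideal I -> I 'X_[g] -> mdeg g = al' -> (1 <= al')%N.
  move=> h1 hg dg; case: al' dg => // /eqP; rewrite mdeg_eq0 => /eqP g0.
  by move: hg; rewrite g0 mpolyX0.
split; first by split; [exact: pos _ _ _ hA1 (hMA _ MgA) dgA | split; [exact: pos _ _ _ hB1 (hMB _ MgB) dgB | by []]].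
split; first by split; [exact: inG_x | split; [exact: inG_y | split; [exact: inG_x|exact: inG_y]]].
have := BTm _ (mul_mem XA YB); rewrite xyD addn0 add0n.
move/bt_good/goodX_inv => [h [d [Gh E]]].
have hE := le_xy hN E ltac:(have := Gdeg _ Gh; lia).
case: Gh => [[I1 [I2 [dj [hI [hx _]]]]]|hx].
  have [e1 e2] := xy_inj hN (etrans (esym hE) hx).
  exists I1, I2; split; last by [].
  by move=> i /hI; lia.
have := congr1 mdeg hE; rewrite hx mdeg_xy //; lia.
Qed.
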